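(* For every choice of environment function $Env()$, ESAdapt under the reward function $Rew_{\#comp}()$ is unsolvable: there is no algorithm (Turing machine), regardless of running time or memory, that produces the correct output for every instance.
   Context: Model. Let $X=\{x_1,\dots,x_{|X|}\}$ be Boolean variables and $O$ a finite output set. Software system requirements are a finite set $R$ of pairs $(i,o)$, where $i$ is a truth assignment to $X$ and $o\in O$. Interfaces and components follow the Dana runtime component model: an interface is a set of function prototypes (function name, return type, parameter types) together with a set of typed transfer fields; a component provides one or more interfaces and requires zero or more interfaces, and contains code (in a Dana-like imperative language with assignments, conditionals, loops, arrays, function calls and an output statement; this language can simulate any Turing machine) implementing every function of its provided interfaces; this code may call functions and use transfer fields of its required interfaces. $L_{int}$ and $L_{comp}$ are finite libraries of interfaces and components. Given a base component $c\in L_{comp}$ implementing a function main, a valid component-based software system $S$ based on $c$ is obtained by choosing, for each required interface of $c$, a component of $L_{comp}$ providing it, and recursively for each required interface of every chosen component; separate copies of a component are used for separate required-interface occurrences, and when a component providing several interfaces implements one of them, only a reduced copy containing that interface's code is used. Its component wiring tree has root $c$, vertices the chosen component copies, arcs labelled by the implemented interfaces; no component label may occur twice on a root-to-leaf path. $S$ is working relative to $R$ if for every $(i,o)\in R$, running $S$ on input $i$ outputs $o$. An environment function $Env()$ maps a system to events/metric values and is computable in polynomial time. $Rew_{\#comp}(S)$ is the number of components in $S$. Problem ESAdapt under $Rew_{\#comp}()$: Input: $R$, $L_{int}$, $L_{comp}$, a working system $S$ based on a component $c\in L_{comp}$ relative to $R$, $L_{int}$, $L_{comp}$, and $Env()$.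 Output: a working system $S'$ based on $c$ relative to $L_{int},L_{comp},R$ having the smallest value of $Rew_{\#comp}(S')$ over all working systems based on $c$ relative to $L_{int},L_{comp},R$. *)

(* Defs.v *)
From mathcomp Require Import all_boot.

Set Implicit Arguments.
Unset Strict Implicit.
Unset Printing Implicit Defensive.

(* 1. The Dana-like imperative language                                   *)

Inductive val : Type :=
| VNat of nat
| VBool of bool
| VArr of seq val.

Inductive ty : Type := TInt | TBool | TArr of ty | TVoid.

Inductive binop : Type := BAdd | BSub | BMul | BDiv | BMod | BEq | BLt | BAnd | BOr.

(* Expressions.  [ECall k f args] calls function [f] of the [k]-th required
   interface of the current component; [EField k x] reads transfer field [x]
   of the [k]-th required interface; [EInput j] reads the truth value of the
   input variable x_(j+1). *)
Inductive expr : Type :=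
| EConst of val
| EVar of nat
| EInput of nat
| EBin of binop & expr & expr
| ENot of expr
| ENewArr of expr
| ELen of expr
| EIndex of expr & expr
| ECall of nat & nat & seq expr
| EField of nat & nat.

(* Statements.  [SOutput e] outputs the value of [e] (and ends the run). *)
Inductive stmt : Type :=
| SSkip
| SAssign of nat & expr
| SArrSet of nat & expr & expr
| SSeq of stmt & stmt
| SIf of expr & stmt & stmt
| SWhile of expr & stmt
| SReturn of expr
| SOutput of expr
| SExpr of expr
| SSetField of nat & nat & expr.

(* 2. Interfaces, components, wiring trees                                *)

Record proto := Proto { pname : nat; pret : ty; pparams : seq ty }.

Record iface := Iface { iname : nat; iprotos : seq proto; ifields : seq (nat * ty) }.

Record fundef := FunDef { fparams : seq nat; fbody : stmt }.

(* component: name (label), provided interfaces, required interfaces (a list: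
   each entry is one required-interface occurrence), and code: entries
   (interface name, function name, implementation). *)
Record component := Comp {
  cname : nat; cprov : seq nat; creq : seq nat;
  ccode : seq (nat * nat * fundef) }.

(* Component wiring tree: a vertex is (a copy of) a component, given by its
   label; its children are listed in the order of the required-interface
   occurrences of that component, each arc labelled by the interface the
   child implements. *)
Inductive wtree : Type := WNode of nat & seq (nat * wtree).

Definition main_fn : nat := 0.

Definition find_iface (L : seq iface) (n : nat) : option iface :=
  ohead [seq I <- L | iname I == n].
Definition find_comp (L : seq component) (n : nat) : option component :=
  ohead [seq C <- L | cname C == n].
(* code of function [f] of interface [I] in component [C] (reduced copy:
   only the code of interface [I] is considered) *)
Definition find_code (C : component) (I f : nat) : option fundef :=
  ohead [seq e.2 | e <- ccode C & (e.1.1 == I) && (e.1.2 == f)].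
Definition find_main (C : component) : option fundef :=
  ohead [seq e.2 | e <- ccode C & (e.1.2 == main_fn) && (e.1.1 \in cprov C)].

(* 3. Operational semantics (fuel-indexed, deterministic)                 *)

Fixpoint val_eqb (v w : val) : bool :=
  match v, w with
  | VNat a, VNat b => a == b
  | VBool a, VBool b => a == b
  | VArr l, VArr m =>
      (fix go (l m : seq val) : bool :=
         match l, m with
         | [::], [::] => true
         | x :: l', y :: m' => val_eqb x y && go l' m'
         | _, _ => false
         end) l m
  | _, _ => false
  end.

Definition binop_sem (op : binop) (v1 v2 : val) : option val :=
  match op, v1, v2 with
  | BAdd, VNat a, VNat b => Some (VNat (a + b))
  | BSub, VNat a, VNat b => Some (VNat (a - b))
  | BMul, VNat a, VNat b => Some (VNat (a * b))
  | BDiv, VNat a, VNat b => Some (VNat (a %/ b))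
  | BMod, VNat a, VNat b => Some (VNat (a %% b))
  | BEq, _, _ => Some (VBool (val_eqb v1 v2))
  | BLt, VNat a, VNat b => Some (VBool (a < b))
  | BAnd, VBool a, VBool b => Some (VBool (a && b))
  | BOr, VBool a, VBool b => Some (VBool (a || b))
  | _, _, _ => None
  end.

Definition default_val (t : ty) : val :=
  match t with
  | TInt => VNat 0 | TBool => VBool false | TArr _ => VArr [::] | TVoid => VNat 0
  end.

(* results: normal value, the run has produced its output (halted), runtime
   error, out of fuel *)
Inductive res (A : Type) : Type :=
| ROk of A
| RHalt of val
| RErr
| RFuel.
Arguments ROk {A}.
Arguments RHalt {A}.
Arguments RErr {A}.
Arguments RFuel {A}.

Definition rbind {A B : Type} (r : res A) (f : A -> res B) : res B :=
  match r with
  | ROk a => f a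
  | RHalt v => RHalt v
  | RErr => RErr
  | RFuel => RFuel
  end.

Definition ropt {A : Type} (o : option A) : res A :=
  if o is Some a then ROk a else RErr.

Inductive outcome : Type := ONormal | OReturn of val.

Definition locals := seq (nat * val).
(* transfer-field store: (path of the arc in the wiring tree, field) |-> value *)
Definition fstore := seq ((seq nat * nat) * val).

Definition lookup_loc (l : locals) (x : nat) : option val :=
  ohead [seq p.2 | p <- l & p.1 == x].
Definition lookup_fs (s : fstore) (k : seq nat * nat) : option val :=
  ohead [seq p.2 | p <- s & p.1 == k].

Record senv := SEnv { sint : seq iface; scomp : seq component; sinp : seq bool }.

Definition field_ty (E : senv) (cn k x : nat) : option ty :=
  match find_comp (scomp E) cn with
  | None => None
  | Some C =>
    if k < size (creq C) then
      match find_iface (sint E) (nth 0 (creq C) k) with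
      | None => None
      | Some Ii => ohead [seq p.2 | p <- ifields Ii & p.1 == x]
      end
    else None
  end.

Fixpoint eval (n : nat) (E : senv) (nd : wtree) (p : seq nat)
    (loc : locals) (fs : fstore) (e : expr) {struct n} : res (val * fstore) :=
  match n with
  | 0 => RFuel
  | n'.+1 =>
    match e with
    | EConst v => ROk (v, fs)
    | EVar x => rbind (ropt (lookup_loc loc x)) (fun v => ROk (v, fs))
    | EInput j =>
        if j < size (sinp E) then ROk (VBool (nth false (sinp E) j), fs) else RErr
    | EBin op e1 e2 =>
        rbind (eval n' E nd p loc fs e1) (fun r1 =>
        rbind (eval n' E nd p loc r1.2 e2) (fun r2 =>
        rbind (ropt (binop_sem op r1.1 r2.1)) (fun v => ROk (v, r2.2))))
    | ENot e1 =>
        rbind (eval n' E nd p loc fs e1) (fun r1 =>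
          if r1.1 is VBool b then ROk (VBool (~~ b), r1.2) else RErr)
    | ENewArr e1 =>
        rbind (eval n' E nd p loc fs e1) (fun r1 =>
          if r1.1 is VNat m then ROk (VArr (nseq m (VNat 0)), r1.2) else RErr)
    | ELen e1 =>
        rbind (eval n' E nd p loc fs e1) (fun r1 =>
          if r1.1 is VArr l then ROk (VNat (size l), r1.2) else RErr)
    | EIndex e1 e2 =>
        rbind (eval n' E nd p loc fs e1) (fun r1 =>
        rbind (eval n' E nd p loc r1.2 e2) (fun r2 =>
          match r1.1, r2.1 with
          | VArr l, VNat i => if i < size l then ROk (nth (VNat 0) l i, r2.2) else RErr
          | _, _ => RErr
          end))
    | ECall k f args =>
        let fix evargs (l : seq expr) (fs0 : fstore) : res (seq val * fstore) :=
          match l with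
          | [::] => ROk ([::], fs0)
          | a :: l' =>
              rbind (eval n' E nd p loc fs0 a) (fun r =>
              rbind (evargs l' r.2) (fun rs => ROk (r.1 :: rs.1, rs.2)))
          end in
        rbind (evargs args fs) (fun rs =>
          let: WNode _ kids := nd in
          if k < size kids then
            let: (Ilab, child) := nth (0, WNode 0 [::]) kids k in
            let: WNode cn' _ := child in
            rbind (ropt (find_comp (scomp E) cn')) (fun C' =>
            rbind (ropt (find_code C' Ilab f)) (fun fd =>
              if size (fparams fd) == size rs.1 then
                rbind (exec n' E child (rcons p k) (zip (fparams fd) rs.1) rs.2 (fbody fd))
                  (fun r => match r.1.1 with
                            | OReturn v => ROk (v, r.2)
                            | ONormal => ROk (VNat 0, r.2)
                            end)
              else RErr))
          else RErr)
    | EField k x =>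
        let: WNode cn _ := nd in
        rbind (ropt (field_ty E cn k x)) (fun t =>
          match lookup_fs fs (rcons p k, x) with
          | Some v => ROk (v, fs)
          | None => ROk (default_val t, fs)
          end)
    end
  end
with exec (n : nat) (E : senv) (nd : wtree) (p : seq nat)
    (loc : locals) (fs : fstore) (s : stmt) {struct n}
    : res (outcome * locals * fstore) :=
  match n with
  | 0 => RFuel
  | n'.+1 =>
    match s with
    | SSkip => ROk (ONormal, loc, fs)
    | SAssign x e => rbind (eval n' E nd p loc fs e) (fun r => ROk (ONormal, (x, r.1) :: loc, r.2))
    | SArrSet x ei ev =>
        rbind (ropt (lookup_loc loc x)) (fun a =>
        rbind (eval n' E nd p loc fs ei) (fun ri =>
        rbind (eval n' E nd p loc ri.2 ev) (fun rv =>
          match a, ri.1 with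
          | VArr l, VNat i =>
              if i < size l then ROk (ONormal, (x, VArr (set_nth (VNat 0) l i rv.1)) :: loc, rv.2)
              else RErr
          | _, _ => RErr
          end)))
    | SSeq s1 s2 =>
        rbind (exec n' E nd p loc fs s1) (fun r =>
          match r.1.1 with
          | ONormal => exec n' E nd p r.1.2 r.2 s2
          | OReturn v => ROk r
          end)
    | SIf c s1 s2 =>
        rbind (eval n' E nd p loc fs c) (fun r =>
          match r.1 with
          | VBool true => exec n' E nd p loc r.2 s1
          | VBool false => exec n' E nd p loc r.2 s2
          | _ => RErr
          end)
    | SWhile c b =>
        rbind (eval n' E nd p loc fs c) (fun r =>
          match r.1 with
          | VBool true =>
              rbind (exec n' E nd p loc r.2 b) (fun rb =>
                match rb.1.1 with
                | ONormal => exec n' E nd p rb.1.2 rb.2 (SWhile c b)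
                | OReturn v => ROk rb
                end)
          | VBool false => ROk (ONormal, loc, r.2)
          | _ => RErr
          end)
    | SReturn e => rbind (eval n' E nd p loc fs e) (fun r => ROk (OReturn r.1, loc, r.2))
    | SOutput e => rbind (eval n' E nd p loc fs e) (fun r => RHalt r.1)
    | SExpr e => rbind (eval n' E nd p loc fs e) (fun r => ROk (ONormal, loc, r.2))
    | SSetField k x e =>
        let: WNode cn _ := nd in
        rbind (ropt (field_ty E cn k x)) (fun _ =>
        rbind (eval n' E nd p loc fs e) (fun r => ROk (ONormal, loc, ((rcons p k, x), r.1) :: r.2)))
    end
  end.

Definition run_system (fuel : nat) (Li : seq iface) (Lc : seq component)
    (i : seq bool) (S : wtree) : option val :=
  let: WNode cn _ := S in
  match find_comp Lc cn with
  | None => None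
  | Some C =>
    match find_main C with
    | None => None
    | Some fd =>
      match exec fuel (SEnv Li Lc i) S [::] [::] [::] (fbody fd) with
      | RHalt v => Some v
      | _ => None
      end
    end
  end.

Definition outputs (Li : seq iface) (Lc : seq component) (S : wtree)
    (i : seq bool) (o : nat) : Prop :=
  exists fuel, run_system fuel Li Lc i S = Some (VNat o).

(* 4. Valid libraries, valid and working systems, reward                  *)

Fixpoint InL {T : Type} (x : T) (s : seq T) : Prop :=
  match s with [::] => False | y :: s' => y = x \/ InL x s' end.

Definition lib_ok (Li : seq iface) (Lc : seq component) : Prop :=
  uniq (map iname Li) /\ uniq (map cname Lc) /\
  forall C, InL C Lc ->
    (forall I, I \in cprov C ++ creq C -> exists Ii, find_iface Li I = Some Ii) /\
    (forall I Ii, I \in cprov C -> find_iface Li I = Some Ii ->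
       forall pr, InL pr (iprotos Ii) ->
         exists fd, find_code C I (pname pr) = Some fd /\
                    size (fparams fd) = size (pparams pr)).

Definition root_label (t : wtree) : nat := let: WNode cn _ := t in cn.

(* [valid_tree Lc anc t]: t is a valid wiring subtree whose root is not
   labelled by any label in [anc] (the labels on the path from the root). *)
Fixpoint valid_tree (Lc : seq component) (anc : seq nat) (t : wtree) : Prop :=
  let: WNode cn kids := t in
  cn \notin anc /\
  exists C, find_comp Lc cn = Some C /\
  (fix allk (ks : seq (nat * wtree)) (rs : seq nat) : Prop :=
     match ks, rs with
     | [::], [::] => True
     | (Ilab, t') :: ks', r :: rs' =>
         Ilab = r /\
         (exists C', find_comp Lc (root_label t') = Some C' /\ Ilab \in cprov C') /\
         valid_tree Lc (cn :: anc) t' /\ allk ks' rs'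
     | _, _ => False
     end) kids (creq C).

Definition based_on (Lc : seq component) (c : nat) (S : wtree) : Prop :=
  root_label S = c /\ valid_tree Lc [::] S.

Definition working (R : seq (seq bool * nat)) (Li : seq iface)
    (Lc : seq component) (S : wtree) : Prop :=
  forall i o, (i, o) \in R -> outputs Li Lc S i o.

Fixpoint ncomp (t : wtree) : nat :=
  let: WNode _ kids := t in
  (fix go (ks : seq (nat * wtree)) : nat :=
     match ks with [::] => 0 | (_, t') :: ks' => ncomp t' + go ks' end) kids + 1.

Definition Rew_ncomp {EnvT : Type} (Env : wtree -> EnvT) (S : wtree) : nat := ncomp S.

(* 5. The problem ESAdapt under Rew_#comp                                 *)

(* An instance: number of variables |X|, requirements R, L_int, L_comp,
   the label of the base component c, the current system S. *)
Record instance := Inst {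
  inv : nat;
  ireq : seq (seq bool * nat);
  iint : seq iface;
  icomp : seq component;
  ibase : nat;
  isys : wtree }.

Definition valid_instance (I : instance) : Prop :=
  lib_ok (iint I) (icomp I) /\
  (forall i o, (i, o) \in ireq I -> size i = inv I) /\
  (exists C, find_comp (icomp I) (ibase I) = Some C /\ exists fd, find_main C = Some fd) /\
  based_on (icomp I) (ibase I) (isys I) /\
  working (ireq I) (iint I) (icomp I) (isys I).

Definition ESAdapt_sol {EnvT : Type} (Env : wtree -> EnvT) (I : instance) (S' : wtree) : Prop :=
  based_on (icomp I) (ibase I) S' /\ working (ireq I) (iint I) (icomp I) S' /\
  forall S'', based_on (icomp I) (ibase I) S'' -> working (ireq I) (iint I) (icomp I) S'' ->
    Rew_ncomp Env S' <= Rew_ncomp Env S''.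

(* 6. Algorithms and encodings                                            *)

(* Algorithms are programs of the (Turing-complete) language above: the
   input is in variable 0; the program's answer is the value it outputs. *)
Definition run_alg (fuel : nat) (A : stmt) (x : val) : option val :=
  match exec fuel (SEnv [::] [::] [::]) (WNode 0 [::]) [::] [:: (0, x)] [::] A with
  | RHalt v => Some v
  | _ => None
  end.

Definition tag (k : nat) (l : seq val) : val := VArr (VNat k :: l).
Definition enc_nat (n : nat) : val := VNat n.
Definition enc_bool (b : bool) : val := VBool b.
Definition enc_seq {T : Type} (f : T -> val) (s : seq T) : val := VArr (map f s).

Fixpoint enc_val (v : val) : val :=
  match v with
  | VNat n => tag 0 [:: VNat n]
  | VBool b => tag 1 [:: VBool b]
  | VArr l => tag 2 [:: VArr (map enc_val l)]
  end.

Fixpoint enc_ty (t : ty) : val :=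
  match t with
  | TInt => tag 0 [::] | TBool => tag 1 [::] | TArr t' => tag 2 [:: enc_ty t'] | TVoid => tag 3 [::]
  end.

Definition enc_binop (o : binop) : val :=
  VNat (match o with BAdd => 0 | BSub => 1 | BMul => 2 | BDiv => 3 | BMod => 4
                   | BEq => 5 | BLt => 6 | BAnd => 7 | BOr => 8 end).

Fixpoint enc_expr (e : expr) : val :=
  match e with
  | EConst v => tag 0 [:: enc_val v]
  | EVar x => tag 1 [:: VNat x]
  | EInput j => tag 2 [:: VNat j]
  | EBin o e1 e2 => tag 3 [:: enc_binop o; enc_expr e1; enc_expr e2]
  | ENot e1 => tag 4 [:: enc_expr e1]
  | ENewArr e1 => tag 5 [:: enc_expr e1]
  | ELen e1 => tag 6 [:: enc_expr e1]
  | EIndex e1 e2 => tag 7 [:: enc_expr e1; enc_expr e2]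
  | ECall k f args => tag 8 [:: VNat k; VNat f; VArr (map enc_expr args)]
  | EField k x => tag 9 [:: VNat k; VNat x]
  end.

Fixpoint enc_stmt (s : stmt) : val :=
  match s with
  | SSkip => tag 0 [::]
  | SAssign x e => tag 1 [:: VNat x; enc_expr e]
  | SArrSet x e1 e2 => tag 2 [:: VNat x; enc_expr e1; enc_expr e2]
  | SSeq s1 s2 => tag 3 [:: enc_stmt s1; enc_stmt s2]
  | SIf c s1 s2 => tag 4 [:: enc_expr c; enc_stmt s1; enc_stmt s2]
  | SWhile c b => tag 5 [:: enc_expr c; enc_stmt b]
  | SReturn e => tag 6 [:: enc_expr e]
  | SOutput e => tag 7 [:: enc_expr e]
  | SExpr e => tag 8 [:: enc_expr e]
  | SSetField k x e => tag 9 [:: VNat k; VNat x; enc_expr e]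
  end.

Definition enc_proto (p : proto) : val :=
  VArr [:: VNat (pname p); enc_ty (pret p); enc_seq enc_ty (pparams p)].
Definition enc_iface (I : iface) : val :=
  VArr [:: VNat (iname I); enc_seq enc_proto (iprotos I);
           enc_seq (fun q => VArr [:: VNat q.1; enc_ty q.2]) (ifields I)].
Definition enc_fundef (f : fundef) : val :=
  VArr [:: enc_seq enc_nat (fparams f); enc_stmt (fbody f)].
Definition enc_component (C : component) : val :=
  VArr [:: VNat (cname C); enc_seq enc_nat (cprov C); enc_seq enc_nat (creq C);
           enc_seq (fun q => VArr [:: VNat q.1.1; VNat q.1.2; enc_fundef q.2]) (ccode C)].

Fixpoint enc_wtree (t : wtree) : val :=
  let: WNode cn kids := t in
  VArr [:: VNat cn; VArr (map (fun q => VArr [:: VNat q.1; enc_wtree q.2]) kids)].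

Fixpoint dec_wtree (v : val) : option wtree :=
  match v with
  | VArr [:: VNat cn; VArr ks] =>
      let fix go (ks : seq val) : option (seq (nat * wtree)) :=
        match ks with
        | [::] => Some [::]
        | VArr [:: VNat Ilab; w] :: ks' =>
            match dec_wtree w, go ks' with
            | Some t, Some r => Some ((Ilab, t) :: r)
            | _, _ => None
            end
        | _ => None
        end in
      omap (WNode cn) (go ks)
  | _ => None
  end.

Definition enc_instance (I : instance) : val :=
  VArr [:: VNat (inv I);
           enc_seq (fun q => VArr [:: enc_seq enc_bool q.1; VNat q.2]) (ireq I);
           enc_seq enc_iface (iint I);
           enc_seq enc_component (icomp I);
           VNat (ibase I);
           enc_wtree (isys I)].

Definition solves_ESAdapt {EnvT : Type} (Env : wtree -> EnvT) (A : stmt) : Prop :=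
  forall I, valid_instance I ->
    exists fuel v S', run_alg fuel A (enc_instance I) = Some v /\
                      dec_wtree v = Some S' /\ ESAdapt_sol Env I S'.

(* Main.v *)
Require Import Defs.
From mathcomp Require Import all_boot.
From mathcomp Require Import zify.
Require Import Defs.
Set Implicit Arguments. Unset Strict Implicit. Unset Printing Implicit Defensive.

Definition evargs (n : nat) (E : senv) (nd : wtree) (p : seq nat) (loc : locals) :=
  fix go (l : seq expr) (fs0 : fstore) : res (seq val * fstore) :=
  match l with
  | [::] => ROk ([::], fs0)
  | a :: l' => rbind (eval n E nd p loc fs0 a) (fun r =>
              rbind (go l' r.2) (fun rs => ROk (r.1 :: rs.1, rs.2)))
  end.

Definition call_cont (n : nat) (E : senv) (nd : wtree) (p : seq nat) (k f : nat)
  (rs : seq val * fstore) : res (val * fstore) :=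
          let: WNode _ kids := nd in
          if k < size kids then
            let: (Ilab, child) := nth (0, WNode 0 [::]) kids k in
            let: WNode cn' _ := child in
            rbind (ropt (find_comp (scomp E) cn')) (fun C' =>
            rbind (ropt (find_code C' Ilab f)) (fun fd =>
              if size (fparams fd) == size rs.1 then
                rbind (exec n E child (rcons p k) (zip (fparams fd) rs.1) rs.2 (fbody fd))
                  (fun r => match r.1.1 with
                            | OReturn v => ROk (v, r.2)
                            | ONormal => ROk (VNat 0, r.2)
                            end)
              else RErr))
          else RErr.

Lemma eval_call n E nd p loc fs k f args :
  eval n.+1 E nd p loc fs (ECall k f args) =
  rbind (evargs n E nd p loc args fs) (call_cont n E nd p k f).
Proof. reflexivity. Qed.

Definition ext {A} (x' x : res A) := x <> RFuel -> x' = x.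

Lemma ext_refl A (x : res A) : ext x x. Proof. by []. Qed.

Lemma rbind_ext A B (x x' : res A) (f f' : A -> res B) :
  ext x' x -> (forall a, ext (f' a) (f a)) -> ext (rbind x' f') (rbind x f).
Proof.
case: x => [a|v||] H Hf; rewrite /ext /= => Hn //.
- by rewrite H //; apply: Hf.
- by rewrite H.
- by rewrite H.
Qed.

Ltac ext_step IHe IHx :=
  match goal with
  | |- ext ?x ?x => apply ext_refl
  | |- ext (rbind _ _) (rbind _ _) => apply: rbind_ext; [ | intros ? ]
  | |- ext (eval _ _ _ _ _ _ _) _ => apply: IHe
  | |- ext (exec _ _ _ _ _ _ _) _ => apply: IHx
  | |- ext (match ?x with _ => _ end) _ => destruct x
  | |- ext (if ?b then _ else _) _ => destruct b
  end.

Lemma mono_all n : forall m, n <= m ->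
  (forall E nd p loc fs e, ext (eval m E nd p loc fs e) (eval n E nd p loc fs e)) /\
  (forall E nd p loc fs s, ext (exec m E nd p loc fs s) (exec n E nd p loc fs s)).
Proof.
elim: n => [|n IH] m Hm.
  by split => *; rewrite /ext.
case: m Hm => // m Hm.
have [IHe IHx] := IH m Hm.
have IHa : forall E nd p loc args fs, ext (evargs m E nd p loc args fs) (evargs n E nd p loc args fs).
  move=> E nd p loc; elim=> [|a l IHl] fs /=; first exact: ext_refl.
  apply: rbind_ext => // r; apply: rbind_ext => // rs; exact: ext_refl.
split.
- move=> E nd p loc fs e; case: e.
  all: try (intros; rewrite !eval_call; apply: rbind_ext; [by apply: IHa| intros ?; rewrite /call_cont]).
  all: intros; simpl.
  all: repeat ext_step IHe IHx.
Qed.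

Lemma eval_mono n m E nd p loc fs e r : n <= m -> eval n E nd p loc fs e = r -> r <> RFuel ->
  eval m E nd p loc fs e = r.
Proof. move=> Hnm H Hr; have [He _] := mono_all Hnm; rewrite -H; apply: He; by rewrite H. Qed.

Lemma exec_mono n m E nd p loc fs s r : n <= m -> exec n E nd p loc fs s = r -> r <> RFuel ->
  exec m E nd p loc fs s = r.
Proof. move=> Hnm H Hr; have [_ He] := mono_all Hnm; rewrite -H; apply: He; by rewrite H. Qed.

Lemma eval_det n m E nd p loc fs e r1 r2 : eval n E nd p loc fs e = r1 -> eval m E nd p loc fs e = r2 ->
  r1 <> RFuel -> r2 <> RFuel -> r1 = r2.
Proof.
move=> H1 H2 N1 N2.
rewrite -(@eval_mono n (maxn n m) _ _ _ _ _ _ _ (leq_maxl _ _) H1 N1).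
by rewrite -(@eval_mono m (maxn n m) _ _ _ _ _ _ _ (leq_maxr _ _) H2 N2).
Qed.

Lemma exec_det n m E nd p loc fs s r1 r2 : exec n E nd p loc fs s = r1 -> exec m E nd p loc fs s = r2 ->
  r1 <> RFuel -> r2 <> RFuel -> r1 = r2.
Proof.
move=> H1 H2 N1 N2.
rewrite -(@exec_mono n (maxn n m) _ _ _ _ _ _ _ (leq_maxl _ _) H1 N1).
by rewrite -(@exec_mono m (maxn n m) _ _ _ _ _ _ _ (leq_maxr _ _) H2 N2).
Qed.

Fixpoint peval (loc : locals) (e : expr) : option val :=
  match e with
  | EConst v => Some v
  | EVar x => lookup_loc loc x
  | EBin op e1 e2 => match peval loc e1, peval loc e2 with
                     | Some v1, Some v2 => binop_sem op v1 v2 | _, _ => None end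
  | ENot e1 => if peval loc e1 is Some (VBool b) then Some (VBool (~~ b)) else None
  | ENewArr e1 => if peval loc e1 is Some (VNat m) then Some (VArr (nseq m (VNat 0))) else None
  | ELen e1 => if peval loc e1 is Some (VArr l) then Some (VNat (size l)) else None
  | EIndex e1 e2 => match peval loc e1, peval loc e2 with
                    | Some (VArr l), Some (VNat i) => if i < size l then Some (nth (VNat 0) l i) else None
                    | _, _ => None end
  | _ => None
  end.

Definition EV E nd p loc fs e v := exists n, eval n E nd p loc fs e = ROk (v, fs).

Lemma EV_mono E nd p loc fs e v n0 : (exists n, eval n E nd p loc fs e = ROk (v, fs)) ->
  exists n, n0 <= n /\ eval n E nd p loc fs e = ROk (v, fs).
Proof.
case=> n H; exists (maxn n n0); split; first exact: leq_maxr.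
exact: (eval_mono (leq_maxl _ _) H).
Qed.

Lemma peval_ok E nd p loc fs e v : peval loc e = Some v -> EV E nd p loc fs e v.
Proof.
elim: e v => //=.
- by move=> v' v [<-]; exists 1.
- by move=> x v H; exists 1 => /=; rewrite H.
- move=> op e1 IH1 e2 IH2 v.
  case E1: (peval loc e1) => [v1|] //; case E2: (peval loc e2) => [v2|] // H.
  have [n1 H1] := IH1 _ E1; have [n2 [Hle H2]] := EV_mono n1 (IH2 _ E2).
  exists n2.+1 => /=.
  have -> : eval n2 E nd p loc fs e1 = ROk (v1, fs).
    exact: (eval_mono Hle H1).
  by rewrite /= H2 /= H.
- move=> e1 IH v; case E1: (peval loc e1) => [w|] //.
  case: w E1 => // b E1 [<-].
  have [n1 H1] := IH _ E1; exists n1.+1 => /=; by rewrite H1.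
- move=> e1 IH v; case E1: (peval loc e1) => [w|] //.
  case: w E1 => // b E1 [<-].
  have [n1 H1] := IH _ E1; exists n1.+1 => /=; by rewrite H1.
- move=> e1 IH v; case E1: (peval loc e1) => [w|] //.
  case: w E1 => // b E1 [<-].
  have [n1 H1] := IH _ E1; exists n1.+1 => /=; by rewrite H1.
- move=> e1 IH1 e2 IH2 v.
  case E1: (peval loc e1) => [w1|] //; case: w1 E1 => // l E1.
  case E2: (peval loc e2) => [w2|] //; case: w2 E2 => // i E2.
  case: ifP => // Hi [<-].
  have [n1 H1] := IH1 _ E1; have [n2 [Hle H2]] := EV_mono n1 (IH2 _ E2).
  exists n2.+1 => /=.
  have -> : eval n2 E nd p loc fs e1 = ROk (VArr l, fs).
    exact: (eval_mono Hle H1).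
  by rewrite /= H2 /= Hi.
Qed.

Definition EXN E nd p fs loc s (P : locals -> Prop) :=
  exists n loc', exec n E nd p loc fs s = ROk (ONormal, loc', fs) /\ P loc'.

Lemma EXN_weak E nd p fs loc s (P Q : locals -> Prop) :
  EXN E nd p fs loc s P -> (forall l, P l -> Q l) -> EXN E nd p fs loc s Q.
Proof. case=> n [l [H HP]] HPQ; exists n, l; split => //; exact: HPQ. Qed.

Lemma EXN_skip E nd p fs loc (P : locals -> Prop) : P loc -> EXN E nd p fs loc SSkip P.
Proof. by move=> H; exists 1, loc. Qed.

Lemma EXN_assign E nd p fs loc x e v (P : locals -> Prop) :
  peval loc e = Some v -> P ((x, v) :: loc) -> EXN E nd p fs loc (SAssign x e) P.
Proof.
move=> He HP; have [n Hn] := peval_ok E nd p fs He.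
by exists n.+1, ((x, v) :: loc); rewrite /= Hn.
Qed.

Lemma EXN_arrset E nd p fs loc x ei ev l i v (P : locals -> Prop) :
  lookup_loc loc x = Some (VArr l) -> peval loc ei = Some (VNat i) -> i < size l ->
  peval loc ev = Some v ->
  P ((x, VArr (set_nth (VNat 0) l i v)) :: loc) -> EXN E nd p fs loc (SArrSet x ei ev) P.
Proof.
move=> Hx Hi Hil Hv HP.
have [n1 H1] := peval_ok E nd p fs Hi.
have [n2 [Hle H2]] := EV_mono n1 (peval_ok E nd p fs Hv).
exists n2.+1, ((x, VArr (set_nth (VNat 0) l i v)) :: loc).
by rewrite /= Hx /= (eval_mono Hle H1) //= H2 /= Hil.
Qed.

Lemma EXN_seq E nd p fs loc s1 s2 (P : locals -> Prop) :
  EXN E nd p fs loc s1 (fun l1 => EXN E nd p fs l1 s2 P) -> EXN E nd p fs loc (SSeq s1 s2) P.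
Proof.
case=> n1 [l1 [H1 [n2 [l2 [H2 HP]]]]].
exists (maxn n1 n2).+1, l2; split => //=.
rewrite (exec_mono (leq_maxl n1 n2) H1) //=.
exact: (exec_mono (leq_maxr n1 n2) H2).
Qed.

Lemma EXN_if E nd p fs loc c b s1 s2 (P : locals -> Prop) :
  peval loc c = Some (VBool b) -> EXN E nd p fs loc (if b then s1 else s2) P ->
  EXN E nd p fs loc (SIf c s1 s2) P.
Proof.
move=> Hc [n2 [l2 [H2 HP]]].
have [n1 H1] := peval_ok E nd p fs Hc.
exists (maxn n1 n2).+1, l2; split => //=.
rewrite (eval_mono (leq_maxl n1 n2) H1) //=.
by case: b {Hc H1} H2 => H2; exact: (exec_mono (leq_maxr n1 n2) H2).
Qed.

Lemma EXN_while_t E nd p fs loc c b (P : locals -> Prop) :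
  peval loc c = Some (VBool true) ->
  EXN E nd p fs loc b (fun l1 => EXN E nd p fs l1 (SWhile c b) P) ->
  EXN E nd p fs loc (SWhile c b) P.
Proof.
move=> Hc [n2 [l1 [H2 [n3 [l3 [H3 HP]]]]]].
have [n1 H1] := peval_ok E nd p fs Hc.
exists (maxn n1 (maxn n2 n3)).+1, l3; split => //=.
rewrite (eval_mono (leq_maxl _ _) H1) //=.
rewrite (exec_mono (leq_trans (leq_maxl n2 n3) (leq_maxr _ _)) H2) //=.
exact: (exec_mono (leq_trans (leq_maxr n2 n3) (leq_maxr _ _)) H3).
Qed.

Lemma EXN_while_f E nd p fs loc c b (P : locals -> Prop) :
  peval loc c = Some (VBool false) -> P loc -> EXN E nd p fs loc (SWhile c b) P.
Proof.
move=> Hc HP; have [n1 H1] := peval_ok E nd p fs Hc.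
by exists n1.+1, loc; rewrite /= H1.
Qed.

Definition Loop := SWhile (EConst (VBool true)) SSkip.

Fixpoint T (s : stmt) : stmt :=
  match s with
  | SSeq a b => SSeq (T a) (T b)
  | SIf c a b => SIf c (T a) (T b)
  | SWhile c b => SWhile c (T b)
  | SOutput e => SReturn e
  | SReturn e => Loop
  | s => s
  end.

Lemma Loop_div n E nd p loc fs : exec n E nd p loc fs Loop = RFuel.
Proof.
suff: exec n E nd p loc fs Loop = RFuel /\ exec n.+1 E nd p loc fs Loop = RFuel by case.
elim: n => [|n [IH1 IH2]] //; split => //.
Qed.

Definition nofield (E : senv) (nd : wtree) :=
  let: WNode cn kids := nd in kids = [::] /\ forall k x, field_ty E cn k x = None.

Definition relE {A} (r r' : res (A * fstore)) (fs fs' : fstore) :=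
  match r with
  | ROk (v, f1) => f1 = fs /\ r' = ROk (v, fs')
  | RHalt v => False
  | RErr => r' = RErr \/ r' = RFuel
  | RFuel => r' = RFuel
  end.

Definition relX (r r' : res (outcome * locals * fstore)) (fs fs' : fstore) :=
  match r with
  | ROk (ONormal, l, f1) => f1 = fs /\ r' = ROk (ONormal, l, fs')
  | ROk (OReturn _, _, _) => r' = RFuel
  | RHalt v => exists l, r' = ROk (OReturn v, l, fs')
  | RErr => r' = RErr \/ r' = RFuel
  | RFuel => r' = RFuel
  end.
Arguments relE : simpl never.
Arguments relX : simpl never.

Lemma relE_bind A B (x x' : res (A * fstore)) (f : A * fstore -> res (B * fstore)) f' fs fs' :
  relE x x' fs fs' ->
  (forall a, relE (f (a, fs)) (f' (a, fs')) fs fs') ->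
  relE (rbind x f) (rbind x' f') fs fs'.
Proof.
rewrite /relE; case: x => [[a f1]|v||] /=.
- by case=> -> -> H; apply: H.
- by [].
- by case=> ->; auto.
- by move=> ->.
Qed.

Lemma relEX_bind A (x x' : res (A * fstore)) f f' fs fs' :
  relE x x' fs fs' ->
  (forall a, relX (f (a, fs)) (f' (a, fs')) fs fs') ->
  relX (rbind x f) (rbind x' f') fs fs'.
Proof.
rewrite /relE /relX; case: x => [[a f1]|v||] /=.
- by case=> -> -> H; apply: H.
- by [].
- by case=> ->; auto.
- by move=> ->.
Qed.

Lemma relX_seq x x' g g' fs fs' :
  relX x x' fs fs' ->
  (forall l, relX (g (ONormal, l, fs)) (g' (ONormal, l, fs')) fs fs') ->
  (forall v l f, g (OReturn v, l, f) = ROk (OReturn v, l, f)) ->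
  (forall v l f, g' (OReturn v, l, f) = ROk (OReturn v, l, f)) ->
  relX (rbind x g) (rbind x' g') fs fs'.
Proof.
move=> H Hn Hg Hg'; move: H; rewrite /relX.
case: x => [[[[|v] l] f1]|v||] /=.
- by case=> -> ->; apply: Hn.
- by move=> ->; rewrite Hg.
- by case=> l ->; rewrite /= Hg'; exists l.
- by case=> ->; auto.
- by move=> ->.
Qed.

Ltac relE_tac IHe IHa :=
  repeat (simpl; match goal with
  | |- relE (rbind (eval _ _ _ _ _ _ _) _) (rbind _ _) _ _ => apply: relE_bind; [apply: IHe | intros ?]
  | |- relE (rbind (evargs _ _ _ _ _ _ _) _) (rbind _ _) _ _ => apply: relE_bind; [apply: IHa | intros ?]
  | |- relE (rbind (ropt ?o) _) (rbind (ropt ?o) _) _ _ => destruct o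
  | |- relE (match ?x with _ => _ end) _ _ _ => destruct x
  | |- relE (if ?b then _ else _) _ _ _ => destruct b
  | |- relE (ROk _) (ROk _) _ _ => by rewrite /relE; split
  | |- relE RErr _ _ _ => by rewrite /relE; left
  end).

Ltac relX_tac IHe IHx :=
  repeat (simpl; match goal with
  | |- relX (rbind (eval _ _ _ _ _ _ _) _) (rbind _ _) _ _ => apply: relEX_bind; [apply: IHe | intros ?]
  | |- relX (rbind (exec _ _ _ _ _ _ _) _) (rbind _ _) _ _ =>
        apply: relX_seq; [apply: IHx | intros ? | by [] | by []]
  | |- relX (exec _ _ _ _ _ _ _) _ _ _ => apply: IHx
  | |- relX (rbind (ropt ?o) _) (rbind (ropt ?o) _) _ _ => destruct o
  | |- relX (match ?x with _ => _ end) _ _ _ => destruct x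
  | |- relX (if ?b then _ else _) _ _ _ => destruct b
  | |- relX (ROk _) (ROk _) _ _ => by rewrite /relX; split
  | |- relX RErr _ _ _ => by rewrite /relX; left
  | |- relX (RHalt _) (ROk _) _ _ => by rewrite /relX /=; eexists
  end).

Lemma sim_all n : forall E cn p E' cn' p', nofield E (WNode cn [::]) -> nofield E' (WNode cn' [::]) -> sinp E = sinp E' ->
  (forall loc fs fs' e, relE (eval n E (WNode cn [::]) p loc fs e) (eval n E' (WNode cn' [::]) p' loc fs' e) fs fs') /\
  (forall loc fs fs' s, relX (exec n E (WNode cn [::]) p loc fs s) (exec n E' (WNode cn' [::]) p' loc fs' (T s)) fs fs').
Proof.
move=> E cn p E' cn' p' [_ Hf] [_ Hf'] Hi.
elim: n => [|n [IHe IHx]]; first by split.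
have IHa : forall loc args fs fs',
   relE (evargs n E (WNode cn [::]) p loc args fs) (evargs n E' (WNode cn' [::]) p' loc args fs') fs fs'.
  move=> loc; elim=> [|a l IHl] fs fs' /=; first by rewrite /relE.
  apply: relE_bind => //= a0.
  apply: relE_bind => //= [[vs f2]] /=; by rewrite /relE.
split.
{ move=> loc fs fs' e; case: e.
  all: try (intros; rewrite !eval_call; apply: relE_bind; [by apply: IHa| intros ?;
            rewrite /call_cont /=; by rewrite /relE; left]).
  all: try (intros; simpl; rewrite Hf Hf' /=; by rewrite /relE; left).
  all: try (intros; simpl; rewrite Hi).
  all: intros; relE_tac IHe IHa. }
move=> loc fs fs' s; case: s.
all: try (intros; simpl; rewrite Hf Hf' /=; by rewrite /relX; left).
all: try (intros e; have -> : T (SReturn e) = Loop by []; rewrite Loop_div /=;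
  have := IHe loc fs fs e; rewrite /relE /relX;
  case: (eval n E (WNode cn [::]) p loc fs e) => [[a f1]|v||] //=).
all: intros; relX_tac IHe IHx.
all: by right.
Qed.

Lemma T_sim fuel A x v E' cn' p' fs' :
  nofield E' (WNode cn' [::]) -> sinp E' = [::] ->
  run_alg fuel A x = Some v ->
  exists l, exec fuel E' (WNode cn' [::]) p' [:: (0, x)] fs' (T A) = ROk (OReturn v, l, fs').
Proof.
move=> Hn Hs; rewrite /run_alg.
have Hn0 : nofield (SEnv [::] [::] [::]) (WNode 0 [::]) by split.
have [_ Hx] := @sim_all fuel (SEnv [::] [::] [::]) 0 [::] E' cn' p' Hn0 Hn (esym Hs).
have := Hx [:: (0, x)] [::] fs' A; rewrite /relX.
by case: (exec fuel _ _ _ _ _ A) => [[[[|?] ?] ?]|w||] //= H [<-].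
Qed.

Fixpoint assigned (s : stmt) : seq nat :=
  match s with
  | SAssign x _ => [:: x]
  | SArrSet x _ _ => [:: x]
  | SSeq a b => assigned a ++ assigned b
  | SIf _ a b => assigned a ++ assigned b
  | SWhile _ b => assigned b
  | _ => [::]
  end.

Lemma frame_exec n E nd p loc fs s o loc' fs' :
  exec n E nd p loc fs s = ROk (o, loc', fs') ->
  exists ws, loc' = ws ++ loc /\ all (fun q => q.1 \in assigned s) ws.
Proof.
elim: n loc fs s o loc' fs' => [|n IH] loc fs s o loc' fs' //=.
case: s => /=.
- by case=> _ <- _; exists [::].
- move=> x e; case: (eval n E nd p loc fs e) => [[v f1]| | |] //= [_ <- _].
  by exists [:: (x, v)]; rewrite /= inE eqxx.
- move=> x ei ev; case: (lookup_loc loc x) => [a|] //=.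
  case: (eval n E nd p loc fs ei) => [[vi f1]| | |] //=.
  case: (eval n E nd p loc f1 ev) => [[vv f2]| | |] //=.
  case: a => // l; case: vi => // i; case: ifP => // _ [_ <- _].
  by eexists [:: (x, _)]; rewrite /= inE eqxx.
- move=> s1 s2; case E1: (exec n E nd p loc fs s1) => [[[o1 l1] f1]| | |] //=.
  have [ws1 [-> H1]] := IH _ _ _ _ _ _ E1.
  case: o1 E1 => [|v] E1 /=.
    move=> E2; have [ws2 [-> H2]] := IH _ _ _ _ _ _ E2.
    exists (ws2 ++ ws1); rewrite catA; split => //.
    rewrite all_cat; apply/andP; split.
      by apply: sub_all H2 => q; rewrite mem_cat => ->; rewrite orbT.
    by apply: sub_all H1 => q; rewrite mem_cat => ->.
  case=> _ <- _; exists ws1; split => //.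
  by apply: sub_all H1 => q; rewrite mem_cat => ->.
- move=> c s1 s2; case: (eval n E nd p loc fs c) => [[v f1]| | |] //=.
  case: v => // -[] E2; have [ws [-> H]] := IH _ _ _ _ _ _ E2; exists ws; split => //.
    by apply: sub_all H => q; rewrite mem_cat => ->.
  by apply: sub_all H => q; rewrite mem_cat => ->; rewrite orbT.
- move=> c b; case: (eval n E nd p loc fs c) => [[v f1]| | |] //=.
  case: v => // -[]; last by case=> _ <- _; exists [::].
  case E1: (exec n E nd p loc f1 b) => [[[o1 l1] f2]| | |] //=.
  have [ws1 [-> H1]] := IH _ _ _ _ _ _ E1.
  case: o1 E1 => [|v] E1 /=.
    move=> E2; have [ws2 [-> H2]] := IH _ _ _ _ _ _ E2.
    by exists (ws2 ++ ws1); rewrite catA all_cat H1 H2.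
  by case=> _ <- _; exists ws1.
- by move=> e; case: (eval n E nd p loc fs e) => [[v f1]| | |] //= [_ <- _]; exists [::].
- by move=> e; case: (eval n E nd p loc fs e) => [[v f1]| | |].
- by move=> e; case: (eval n E nd p loc fs e) => [[v f1]| | |] //= [_ <- _]; exists [::].
- move=> k x e; case Hnd: nd => [cn kids]; case: (field_ty E cn k x) => //= t.
  by rewrite -Hnd; case: (eval n E nd p loc fs e) => [[v f1]| | |] //= [_ <- _]; exists [::].
Qed.

Lemma lookup_cons x v l y : lookup_loc ((x, v) :: l) y = if x == y then Some v else lookup_loc l y.
Proof. by rewrite /lookup_loc /=; case: (x == y). Qed.

Lemma lookup_cat_notin ws l y : all (fun q => q.1 != y) ws -> lookup_loc (ws ++ l) y = lookup_loc l y.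
Proof.
elim: ws => //= [[x v] ws IH] /andP [/negbTE Hx H].
by rewrite lookup_cons Hx IH.
Qed.

Arguments lookup_loc : simpl never.

Definition EXNf E nd p fs loc s (P : locals -> Prop) :=
  EXN E nd p fs loc s (fun l => P l /\ forall y, y \notin assigned s -> lookup_loc l y = lookup_loc loc y).

Lemma EXN_frame E nd p fs loc s (P : locals -> Prop) :
  EXN E nd p fs loc s P -> EXNf E nd p fs loc s P.
Proof.
case=> n [l [H HP]]; exists n, l; split => //; split => // y Hy.
have [ws [-> Hws]] := frame_exec H.
apply: lookup_cat_notin; apply: sub_all Hws => q Hq.
by apply/eqP => Eq; move: Hy; rewrite -Eq Hq.
Qed.

Fixpoint tok (v : val) : seq nat :=
  match v with
  | VNat n => [:: 0; n]
  | VBool b => [:: 1; nat_of_bool b]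
  | VArr l => flatten (map tok l) ++ [:: 2; size l]
  end.

Fixpoint lnk (s : seq val) : val :=
  match s with [::] => VNat 0 | x :: s' => VArr [:: x; lnk s'] end.

Definition val_ind2 (P : val -> Prop) (Hn : forall n, P (VNat n)) (Hb : forall b, P (VBool b))
  (Ha : forall l, foldr (fun x acc => P x /\ acc) True l -> P (VArr l)) : forall v, P v :=
  fix F v := match v with
  | VNat n => Hn n
  | VBool b => Hb b
  | VArr l => Ha l ((fix G l : foldr (fun x acc => P x /\ acc) True l :=
                      match l with [::] => I | x :: l' => conj (F x) (G l') end) l)
  end.

Notation c n := (EConst (VNat n)).
Notation v x := (EVar x).

Definition PUSH (e : expr) :=
  SSeq (SAssign 17 (ENewArr (c 2))) (SSeq (SArrSet 17 (c 0) e)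
    (SSeq (SArrSet 17 (c 1) (v 12)) (SAssign 12 (v 17)))).
Definition POPLOOP :=
  SWhile (EBin BLt (c 0) (v 16))
    (SSeq (SAssign 16 (EBin BSub (v 16) (c 1)))
    (SSeq (SArrSet 15 (v 16) (EIndex (v 12) (c 0)))
          (SAssign 12 (EIndex (v 12) (c 1))))).
Definition DISPATCH :=
  SIf (EBin BEq (v 13) (c 0)) (PUSH (v 14))
          (SIf (EBin BEq (v 13) (c 1)) (PUSH (EBin BEq (v 14) (c 1)))
             (SSeq (SAssign 15 (ENewArr (v 14))) (SSeq (SAssign 16 (v 14))
                   (SSeq POPLOOP (PUSH (v 15)))))).
Definition BODY :=
  SSeq (SAssign 13 (EIndex (v 1) (v 11)))
  (SSeq (SAssign 14 (EIndex (v 1) (EBin BAdd (v 11) (c 1))))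
  (SSeq DISPATCH (SAssign 11 (EBin BAdd (v 11) (c 2))))).
Definition DECLOOP := SWhile (EBin BLt (v 11) (ELen (v 1))) BODY.
Definition DECODE :=
  SSeq (SAssign 11 (c 0)) (SSeq (SAssign 12 (c 0)) (SSeq DECLOOP (SAssign 2 (EIndex (v 12) (c 0))))).

Definition Sdec (flat : seq nat) i s (loc : locals) :=
  [/\ lookup_loc loc 1 = Some (VArr (map VNat flat)), lookup_loc loc 11 = Some (VNat i)
    & lookup_loc loc 12 = Some (lnk s)].

Fixpoint vars (e : expr) : seq nat :=
  match e with
  | EVar x => [:: x]
  | EBin _ a b => vars a ++ vars b
  | ENot a | ENewArr a | ELen a => vars a
  | EIndex a b => vars a ++ vars b
  | _ => [::]
  end.

Lemma peval_cons x w loc e : x \notin vars e -> peval ((x, w) :: loc) e = peval loc e.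
Proof.
elim: e => //=.
- by move=> y; rewrite inE lookup_cons => /negbTE ->.
- by move=> op a IHa b IHb; rewrite mem_cat => /norP [/IHa -> /IHb ->].
- by move=> a IHa /IHa ->.
- by move=> a IHa /IHa ->.
- by move=> a IHa /IHa ->.
- by move=> a IHa b IHb; rewrite mem_cat => /norP [/IHa -> /IHb ->].
Qed.

Ltac lk := rewrite ?lookup_cons /=.

Lemma PUSH_ok E nd p fs loc e w s (P : locals -> Prop) :
  17 \notin vars e -> lookup_loc loc 12 = Some (lnk s) -> peval loc e = Some w ->
  (forall l, lookup_loc l 12 = Some (lnk (w :: s)) ->
     (forall y, y \notin [:: 17; 12] -> lookup_loc l y = lookup_loc loc y) -> P l) ->
  EXN E nd p fs loc (PUSH e) P.
Proof.
move=> H17 H12 He HP.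
apply: EXN_seq; apply: EXN_assign => //=.
apply: EXN_seq; apply: (@EXN_arrset _ _ _ _ _ _ _ _ (nseq 2 (VNat 0)) 0 w) => //.
  by rewrite peval_cons.
apply: EXN_seq; apply: (@EXN_arrset _ _ _ _ _ _ _ _ [:: w; VNat 0] 1 (lnk s)) => //.
apply: EXN_assign => //; apply: HP; first by rewrite lookup_cons.
move=> y; rewrite !inE => /norP [/negbTE H1 /negbTE H2].
by rewrite !lookup_cons eq_sym H2 !(eq_sym 17) H1.
Qed.

Lemma set_nth_nseq (m : nat) (y z : val) t :
  set_nth (VNat 0) (nseq m (VNat 0) ++ z :: t) m y = nseq m (VNat 0) ++ y :: t.
Proof. by elim: m => //= m ->. Qed.

Lemma nseqS_cat (m : nat) (x : val) t : nseq m.+1 x ++ t = nseq m x ++ x :: t.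
Proof. by elim: m => //= m ->. Qed.

Lemma POP_ok E nd p fs (l s : seq val) m loc (P : locals -> Prop) :
  m <= size l ->
  lookup_loc loc 16 = Some (VNat m) ->
  lookup_loc loc 12 = Some (lnk (rev (take m l) ++ s)) ->
  lookup_loc loc 15 = Some (VArr (nseq m (VNat 0) ++ drop m l)) ->
  (forall l', lookup_loc l' 12 = Some (lnk s) -> lookup_loc l' 15 = Some (VArr l) ->
     (forall y, y \notin [:: 16; 15; 12] -> lookup_loc l' y = lookup_loc loc y) -> P l') ->
  EXN E nd p fs loc POPLOOP P.
Proof.
elim: m loc => [|m IH] loc Hm H16 H12 H15 HP.
  apply: EXN_while_f; first by rewrite /= H16.
  apply: HP => //; rewrite ?H12 ?H15 //= ?take0 ?drop0 ?cats0 //.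
have Hm' : m < size l by [].
apply: EXN_while_t; first by rewrite /= H16.
rewrite (take_nth (VNat 0) Hm') rev_rcons /= in H12.
rewrite nseqS_cat in H15.
apply: EXN_seq; apply: EXN_assign; first by rewrite /= H16 /= subn1.
apply: EXN_seq; apply: (@EXN_arrset _ _ _ _ _ _ _ _ _ m (nth (VNat 0) l m)).
- by rewrite lookup_cons /= H15.
- by rewrite /= lookup_cons.
- by rewrite size_cat size_nseq /= addnS ltnS leq_addr.
- by rewrite /= lookup_cons /= H12.
apply: EXN_assign; first by rewrite /= !lookup_cons /= H12.
rewrite set_nth_nseq.
apply: IH.
- exact: ltnW.
- by rewrite !lookup_cons.
- by rewrite !lookup_cons.
- by rewrite !lookup_cons /= -drop_nth.
move=> l' H1 H2 H3; apply: HP => // y Hy; rewrite H3 //.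
move: Hy; rewrite !inE => /norP [/negbTE N16 /norP [/negbTE N15 /negbTE N12]].
by rewrite !lookup_cons !(eq_sym _ y) N16 N15 N12.
Qed.

Lemma drop_cons2 (fl : seq nat) i k a r : drop i fl = k :: a :: r ->
  [/\ nth 0 fl i = k, nth 0 fl i.+1 = a & i.+1 < size fl].
Proof.
move=> H; split.
- by have := nth_drop i 0 fl 0; rewrite H addn0.
- by have := nth_drop i 0 fl 1; rewrite H addn1.
- have := size_drop i fl; rewrite H /= => Hs.
  by rewrite -subn_gt0 subnS -Hs.
Qed.

Lemma BODY_gen E nd p fs flat i s s' k a r loc :
  Sdec flat i s loc -> drop i flat = k :: a :: r ->
  (forall loc1, lookup_loc loc1 13 = Some (VNat k) -> lookup_loc loc1 14 = Some (VNat a) ->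
     Sdec flat i s loc1 ->
     EXN E nd p fs loc1 DISPATCH (fun l2 => Sdec flat i s' l2)) ->
  EXN E nd p fs loc BODY (fun l => Sdec flat (i + 2) s' l).
Proof.
move=> [H1 H11 H12] Hd HD; have [Hk Ha Hs] := drop_cons2 Hd.
apply: EXN_seq; apply: EXN_assign.
  by rewrite /= H1 H11 /= size_map (ltnW Hs) (nth_map 0) ?Hk // ltnW.
apply: EXN_seq; apply: EXN_assign.
  by rewrite /= !lookup_cons /= H1 H11 /= size_map addn1 Hs (nth_map 0) ?Ha.
apply: EXN_seq; apply: EXN_weak; first apply: HD.
- by rewrite !lookup_cons.
- by rewrite !lookup_cons.
- by split; rewrite !lookup_cons.
move=> l2 [G1 G11 G12]; apply: EXN_assign; first by rewrite /= G11.
by split; rewrite !lookup_cons.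
Qed.

Lemma Sdec_frame flat i s s' loc l :
  Sdec flat i s loc -> lookup_loc l 12 = Some (lnk s') ->
  (forall y, y \notin [:: 17; 12] -> lookup_loc l y = lookup_loc loc y) -> Sdec flat i s' l.
Proof. by case=> H1 H11 _ H12 Hf; split => //; rewrite Hf. Qed.

Lemma D_nat E nd p fs flat i s a loc :
  lookup_loc loc 13 = Some (VNat 0) -> lookup_loc loc 14 = Some (VNat a) -> Sdec flat i s loc ->
  EXN E nd p fs loc DISPATCH (fun l2 => Sdec flat i (VNat a :: s) l2).
Proof.
move=> H13 H14 HS; apply: (@EXN_if _ _ _ _ _ _ true); first by rewrite /= H13.
case: (HS) => _ _ H12.
apply: (@PUSH_ok _ _ _ _ _ _ (VNat a) s) => //.
by move=> l G12 Gf; apply: Sdec_frame HS G12 Gf.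
Qed.

Lemma D_bool E nd p fs flat i s b loc :
  lookup_loc loc 13 = Some (VNat 1) -> lookup_loc loc 14 = Some (VNat (nat_of_bool b)) -> Sdec flat i s loc ->
  EXN E nd p fs loc DISPATCH (fun l2 => Sdec flat i (VBool b :: s) l2).
Proof.
move=> H13 H14 HS; apply: (@EXN_if _ _ _ _ _ _ false); first by rewrite /= H13.
apply: (@EXN_if _ _ _ _ _ _ true); first by rewrite /= H13.
case: (HS) => _ _ H12.
apply: (@PUSH_ok _ _ _ _ _ _ (VBool b) s) => //; first by rewrite /= H14; case: b H14 HS => H14.
by move=> l G12 Gf; apply: Sdec_frame HS G12 Gf.
Qed.

Lemma D_arr E nd p fs flat i s0 (l : seq val) loc :
  lookup_loc loc 13 = Some (VNat 2) -> lookup_loc loc 14 = Some (VNat (size l)) ->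
  Sdec flat i (rev l ++ s0) loc ->
  EXN E nd p fs loc DISPATCH (fun l2 => Sdec flat i (VArr l :: s0) l2).
Proof.
move=> H13 H14 HS; apply: (@EXN_if _ _ _ _ _ _ false); first by rewrite /= H13.
apply: (@EXN_if _ _ _ _ _ _ false); first by rewrite /= H13.
case: (HS) => H1 H11 H12.
apply: EXN_seq; apply: EXN_assign; first by rewrite /= H14.
apply: EXN_seq; apply: EXN_assign; first by rewrite /= lookup_cons H14.
apply: EXN_seq; apply: (@POP_ok _ _ _ _ l s0 (size l)) => //.
all: rewrite ?lookup_cons /= ?take_size ?drop_size ?cats0 //.
move=> l' G12 G15 Gf.
apply: (@PUSH_ok _ _ _ _ _ _ (VArr l) s0) => //.
move=> l2 K12 Kf; split => //.
- by rewrite Kf // Gf // !lookup_cons.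
- by rewrite Kf // Gf // !lookup_cons.
Qed.

Lemma loop_step E nd p fs flat i s s' k a r loc (Q : locals -> Prop) :
  Sdec flat i s loc -> drop i flat = k :: a :: r ->
  (forall loc1, lookup_loc loc1 13 = Some (VNat k) -> lookup_loc loc1 14 = Some (VNat a) ->
     Sdec flat i s loc1 ->
     EXN E nd p fs loc1 DISPATCH (fun l2 => Sdec flat i s' l2)) ->
  (forall loc', Sdec flat (i + 2) s' loc' -> EXN E nd p fs loc' DECLOOP Q) ->
  EXN E nd p fs loc DECLOOP Q.
Proof.
move=> HS Hd HD HK.
have [_ _ Hs] := drop_cons2 Hd.
case: (HS) => H1 H11 _.
apply: EXN_while_t; first by rewrite /= H1 H11 /= size_map ltnW.
apply: EXN_weak; first exact: (BODY_gen HS Hd HD).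
exact: HK.
Qed.

Definition DecP E nd p fs flat w := forall i s rest loc (Q : locals -> Prop),
  drop i flat = tok w ++ rest -> Sdec flat i s loc ->
  (forall loc', Sdec flat (i + size (tok w)) (w :: s) loc' -> EXN E nd p fs loc' DECLOOP Q) ->
  EXN E nd p fs loc DECLOOP Q.

Lemma drop_add_cat (fl a b : seq nat) i : drop i fl = a ++ b -> drop (i + size a) fl = b.
Proof. by move=> H; rewrite addnC -drop_drop H drop_size_cat. Qed.

Lemma dec_list E nd p fs flat : forall l, foldr (fun x acc => DecP E nd p fs flat x /\ acc) True l ->
  forall i s rest loc (Q : locals -> Prop),
  drop i flat = flatten (map tok l) ++ rest -> Sdec flat i s loc ->
  (forall loc', Sdec flat (i + size (flatten (map tok l))) (rev l ++ s) loc' -> EXN E nd p fs loc' DECLOOP Q) ->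
  EXN E nd p fs loc DECLOOP Q.
Proof.
elim=> [|x l IHl] /= Hl i s rest loc Q Hd HS HK.
  by apply: HK; rewrite addn0.
case: Hl => Hx Hl.
apply: (Hx i s (flatten (map tok l) ++ rest)).
- by rewrite Hd catA.
- exact: HS.
move=> loc2 HS2.
apply: (IHl Hl (i + size (tok x)) (x :: s) rest loc2 Q) => //.
  by apply: drop_add_cat; rewrite Hd catA.
move=> loc3 HS3; apply: HK.
by rewrite size_cat addnA rev_cons cat_rcons.
Qed.

Lemma dec_tok E nd p fs flat : forall w, DecP E nd p fs flat w.
Proof.
apply: val_ind2.
- move=> n i s rest loc Q Hd HS HK.
  apply: (loop_step HS Hd); last exact: HK.
  by move=> loc1 H13 H14 HS1; apply: D_nat.
- move=> b i s rest loc Q Hd HS HK.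
  apply: (loop_step HS Hd); last exact: HK.
  by move=> loc1 H13 H14 HS1; apply: D_bool.
- move=> l Hl i s rest loc Q Hd HS HK.
  apply: (@dec_list E nd p fs flat l Hl i s [:: 2, size l & rest] loc Q) => //; first by rewrite Hd /= -catA.
  move=> loc' HS'.
  apply: (@loop_step E nd p fs flat _ _ (VArr l :: s) 2 (size l) rest loc' Q HS'); first by apply: drop_add_cat; rewrite Hd /= -catA.
    by move=> loc1 H13 H14 HS1; apply: D_arr.
  move=> loc'' HS''; apply: HK.
  by rewrite /= size_cat addnA.
Qed.

Lemma DECODE_ok E nd p fs w loc :
  lookup_loc loc 1 = Some (VArr (map VNat (tok w))) ->
  EXN E nd p fs loc DECODE (fun l => lookup_loc l 2 = Some w /\ lookup_loc l 1 = lookup_loc loc 1).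
Proof.
move=> H1; rewrite /DECODE.
apply: EXN_seq; apply: EXN_assign => //.
apply: EXN_seq; apply: EXN_assign => //.
apply: EXN_seq.
apply: (@dec_tok E nd p fs (tok w) w 0 [::] [::]).
- by rewrite drop0 cats0.
- by split; rewrite !lookup_cons.
move=> loc' [G1 G11 G12].
rewrite /DECLOOP; apply: EXN_while_f; first by rewrite /= G1 G11 /= size_map add0n ltnn.
apply: EXN_assign; first by rewrite /= G12.
by split; rewrite !lookup_cons //= G1 H1.
Qed.

Lemma peval_ext l1 l2 e : (forall y, y \in vars e -> lookup_loc l1 y = lookup_loc l2 y) ->
  peval l1 e = peval l2 e.
Proof.
elim: e => //=.
- by move=> y H; apply: H; rewrite inE.
- move=> op a IHa b IHb H; rewrite IHa ?IHb // => y Hy; apply: H; by rewrite mem_cat Hy ?orbT.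
- by move=> a IHa H; rewrite IHa.
- by move=> a IHa H; rewrite IHa.
- by move=> a IHa H; rewrite IHa.
- move=> a IHa b IHb H; rewrite IHa ?IHb // => y Hy; apply: H; by rewrite mem_cat Hy ?orbT.
Qed.

Fixpoint sets (x i : nat) (es : seq expr) : stmt :=
  match es with
  | [::] => SSkip
  | e :: es' => SSeq (SArrSet x (c i) e) (sets x i.+1 es')
  end.
Definition MK x es := SSeq (SAssign x (ENewArr (c (size es)))) (sets x 0 es).

Fixpoint pevals loc (es : seq expr) : option (seq val) :=
  match es with
  | [::] => Some [::]
  | e :: es' => match peval loc e, pevals loc es' with
                | Some w, Some ws => Some (w :: ws) | _, _ => None end
  end.

Lemma sets_ok E nd p fs x loc0 : forall es i pre post ws loc,
  x \notin flatten (map vars es) -> pevals loc0 es = Some ws ->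
  lookup_loc loc x = Some (VArr (pre ++ post)) -> size pre = i -> size post = size es ->
  (forall y, y != x -> lookup_loc loc y = lookup_loc loc0 y) ->
  EXN E nd p fs loc (sets x i es) (fun l => lookup_loc l x = Some (VArr (pre ++ ws)) /\
         forall y, y != x -> lookup_loc l y = lookup_loc loc0 y).
Proof.
elim=> [|e es IH] i pre post ws loc /=.
  move=> _ [<-] Hx _ Hs Hy; apply: EXN_skip; split => //.
  by case: post Hs Hx => // _; rewrite cats0.
rewrite mem_cat negb_or => /andP [Hxe Hxes].
case Ee: (peval loc0 e) => [w|] //; case Ees: (pevals loc0 es) => [ws'|] // [<-].
case: post => // z post Hx Hi [Hs] Hy.
have Hpe : peval loc e = Some w.
  rewrite -Ee; apply: peval_ext => y Hy'; apply: Hy.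
  by apply/eqP => Eq; move: Hxe; rewrite -Eq Hy'.
apply: EXN_seq; apply: (@EXN_arrset _ _ _ _ _ _ _ _ (pre ++ z :: post) i w) => //.
- by rewrite size_cat /= -Hi addnS ltnS leq_addr.
have -> : set_nth (VNat 0) (pre ++ z :: post) i w = rcons pre w ++ post.
  by rewrite -Hi cat_rcons; elim: (pre) => //= a pre' ->.
apply: EXN_weak; first apply: (IH i.+1 (rcons pre w) post ws') => //.
- by rewrite lookup_cons eqxx.
- by rewrite size_rcons Hi.
- by move=> y Hyx; rewrite lookup_cons eq_sym (negbTE Hyx) Hy.
by move=> l [H1 H2]; rewrite cat_rcons in H1.
Qed.

Lemma MK_ok E nd p fs x es ws loc :
  x \notin flatten (map vars es) -> pevals loc es = Some ws ->
  EXN E nd p fs loc (MK x es) (fun l => lookup_loc l x = Some (VArr ws) /\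
         forall y, y != x -> lookup_loc l y = lookup_loc loc y).
Proof.
move=> Hx Hes; rewrite /MK.
apply: EXN_seq; apply: EXN_assign => //.
apply: (@sets_ok E nd p fs x loc es 0 [::] (nseq (size es) (VNat 0))) => //.
- by rewrite lookup_cons eqxx.
- by rewrite size_nseq.
- by move=> y Hy; rewrite lookup_cons eq_sym (negbTE Hy).
Qed.

Definition encn (n : nat) := VArr [:: VNat 0; VNat n].

Definition QLOOP :=
  SWhile (EBin BLt (v 21) (ELen (v 1)))
    (SSeq (SAssign 23 (ENewArr (c 2)))
    (SSeq (SArrSet 23 (c 1) (EIndex (v 1) (v 21)))
    (SSeq (SArrSet 22 (v 21) (v 23))
          (SAssign 21 (EBin BAdd (v 21) (c 1)))))).
Definition QPROG :=
  SSeq (SAssign 22 (ENewArr (ELen (v 1))))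
  (SSeq (SAssign 21 (c 0)) (SSeq QLOOP (MK 3 [:: c 2; v 22]))).

Lemma set_nth_mid (pre post : seq val) z w :
  set_nth (VNat 0) (pre ++ z :: post) (size pre) w = pre ++ w :: post.
Proof. by elim: pre => //= a pre' ->. Qed.

Lemma set_nth_mid' (pre post : seq val) z w i : size pre = i ->
  set_nth (VNat 0) (pre ++ z :: post) i w = pre ++ w :: post.
Proof. by move=> <-; apply: set_nth_mid. Qed.

Lemma QLOOP_ok E nd p fs (flat : seq nat) : forall k j loc (P : locals -> Prop),
  j + k = size flat ->
  lookup_loc loc 1 = Some (VArr (map VNat flat)) ->
  lookup_loc loc 21 = Some (VNat j) ->
  lookup_loc loc 22 = Some (VArr (map encn (take j flat) ++ nseq k (VNat 0))) ->
  (forall l, lookup_loc l 1 = Some (VArr (map VNat flat)) ->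
     lookup_loc l 22 = Some (VArr (map encn flat)) -> P l) ->
  EXN E nd p fs loc QLOOP P.
Proof.
elim=> [|k IH] j loc P Hjk H1 H21 H22 HP.
  rewrite addn0 in Hjk; subst j.
  apply: EXN_while_f; first by rewrite /= H1 H21 /= size_map ltnn.
  by apply: HP => //; rewrite H22 take_size cats0.
have Hj : j < size flat by rewrite -Hjk addnS ltnS leq_addr.
apply: EXN_while_t; first by rewrite /= H1 H21 /= size_map Hj.
apply: EXN_seq; apply: EXN_assign => //.
apply: EXN_seq; apply: (@EXN_arrset _ _ _ _ _ _ _ _ [:: VNat 0; VNat 0] 1 (VNat (nth 0 flat j))) => //.
  by rewrite /= !lookup_cons /= H1 H21 /= size_map Hj (nth_map 0).
apply: EXN_seq; apply: (@EXN_arrset _ _ _ _ _ _ _ _ _ j (encn (nth 0 flat j))).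
- by rewrite !lookup_cons /= H22.
- by rewrite /= !lookup_cons.
- by rewrite size_cat size_map size_take Hj size_nseq addnS ltnS leq_addr.
- by rewrite /= !lookup_cons.
apply: EXN_assign; first by rewrite /= !lookup_cons /= H21.
apply: (IH j.+1).
- by rewrite addSnnS.
- by rewrite !lookup_cons /=.
- by rewrite !lookup_cons /= addn1.
- rewrite !lookup_cons /=.
  rewrite set_nth_mid'; last by rewrite size_map size_take Hj.
  by rewrite (take_nth 0 Hj) map_rcons cat_rcons.
move=> l G1 G22; exact: HP.
Qed.

Lemma QPROG_ok E nd p fs (flat : seq nat) loc :
  lookup_loc loc 1 = Some (VArr (map VNat flat)) ->
  EXN E nd p fs loc QPROG (fun l => lookup_loc l 3 = Some (enc_val (VArr (map VNat flat)))).
Proof.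
move=> H1; rewrite /QPROG.
apply: EXN_seq; apply: EXN_assign; first by rewrite /= H1.
apply: EXN_seq; apply: EXN_assign => //.
apply: EXN_seq; apply: (@QLOOP_ok _ _ _ _ flat (size flat) 0) => //.
all: rewrite ?lookup_cons /= ?size_map ?take0 //.
move=> l G1 G22.
apply: EXN_weak; first apply: (@MK_ok _ _ _ _ 3 _ [:: VNat 2; VArr (map encn flat)]) => //.
  by rewrite /= G22.
move=> l' [-> _] /=; rewrite -map_comp.
by [].
Qed.

Definition ifM := Iface 1 [:: Proto 0 TInt [::]] [::].
Definition ifI := Iface 2 [:: Proto 0 TInt [::]] [::].
Definition ifK := Iface 3 [:: Proto 1 TInt [:: TInt]] [::].
Definition ifJ := Iface 4 [:: Proto 0 TInt [::]] [::].
Definition ifJ2 := Iface 5 [:: Proto 0 TInt [::]] [::].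
Definition LI := [:: ifM; ifI; ifK; ifJ; ifJ2].

Definition mainC := SSeq (SExpr (ECall 0 0 [::])) (SOutput (c 0)).
Definition compC := Comp 1 [:: 1] [:: 2] [:: (1, 0, FunDef [::] mainC)].
Definition compD2 := Comp 3 [:: 2] [:: 4] [:: (2, 0, FunDef [::] SSkip)].
Definition compE := Comp 4 [:: 4] [:: 5] [:: (4, 0, FunDef [::] SSkip)].
Definition compF := Comp 5 [:: 5] [::] [:: (5, 0, FunDef [::] SSkip)].
Definition compA (A : stmt) := Comp 6 [:: 3] [::] [:: (3, 1, FunDef [:: 0] (T A))].

Definition tree1 := WNode 1 [:: (2, WNode 2 [:: (3, WNode 6 [::])])].
Definition tree2 := WNode 1 [:: (2, WNode 3 [:: (4, WNode 4 [:: (5, WNode 5 [::])])])].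
Definition REQ : seq (seq bool * nat) := [:: ([::], 0)].

Fixpoint seqs (l : seq stmt) : stmt :=
  match l with [::] => SSkip | s :: l' => SSeq s (seqs l') end.

Definition ASSEMBLE := seqs [::
  MK 30 [:: c 0; v 3];
  MK 31 [:: c 1; c 1; v 30];
  MK 32 [:: c 3; v 31; EIndex (v 2) (c 1)];
  MK 33 [:: EConst (VArr [::]); v 32];
  MK 34 [:: c 2; c 0; v 33];
  MK 35 [:: v 34];
  MK 36 [:: c 2; EConst (VArr [:: VNat 2]); EConst (VArr [:: VNat 3]); v 35];
  MK 37 [:: EConst (VArr [:: VNat 0]); EIndex (v 2) (c 0)];
  MK 38 [:: c 3; c 1; v 37];
  MK 39 [:: v 38];
  MK 40 [:: c 6; EConst (VArr [:: VNat 3]); EConst (VArr [::]); v 39];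
  MK 41 [:: EConst (enc_component compC); v 36; EConst (enc_component compD2);
            EConst (enc_component compE); EConst (enc_component compF); v 40];
  MK 8 [:: c 0; EConst (enc_seq (fun q => VArr [:: enc_seq enc_bool q.1; VNat q.2]) REQ);
           EConst (enc_seq enc_iface LI); v 41; c 1; EConst (enc_wtree tree2)]].

Definition PRE := SSeq DECODE (SSeq QPROG ASSEMBLE).
Definition POST := SSeq (SAssign 9 (ECall 0 1 [:: v 8]))
                        (SIf (EBin BEq (v 9) (EConst (enc_wtree tree1))) Loop SSkip).
Definition Rest := SSeq PRE POST.

Definition YV (A : stmt) := VArr [:: enc_stmt (T A); enc_stmt Rest].
Definition DATA (A : stmt) := VArr (map VNat (tok (YV A))).
Definition Dprog (A : stmt) := SSeq (SAssign 1 (EConst (DATA A))) Rest.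
Definition compD1 (A : stmt) := Comp 2 [:: 2] [:: 3] [:: (2, 0, FunDef [::] (Dprog A))].
Definition LC (A : stmt) := [:: compC; compD1 A; compD2; compE; compF; compA A].
Definition INST (A : stmt) := Inst 0 REQ LI (LC A) 1 tree2.

Ltac lkall := repeat match goal with
   | H : lookup_loc ?l ?y = _ |- context [lookup_loc ?l ?y] => rewrite H
   | H : forall y, _ -> lookup_loc ?l y = lookup_loc _ y |- context [lookup_loc ?l ?z] =>
       rewrite (H z); [ | by []]
 end.

Lemma PRE_ok E nd p fs A loc :
  lookup_loc loc 1 = Some (DATA A) ->
  EXN E nd p fs loc PRE (fun l => lookup_loc l 8 = Some (enc_instance (INST A))).
Proof.
move=> H1; rewrite /PRE.
apply: EXN_seq; apply: EXN_weak; first exact: (DECODE_ok _ _ _ _ H1).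
move=> l1 [G2 G1].
apply: EXN_seq; apply: EXN_weak; first apply: EXN_frame; first apply: (QPROG_ok _ _ _ _ (flat := tok (YV A))).
  by rewrite G1 H1.
move=> l2 [G3 Gf2].
have G22 : lookup_loc l2 2 = Some (YV A) by rewrite Gf2.
rewrite /ASSEMBLE /seqs.
do 13 (apply: EXN_seq; apply: EXN_weak; first (apply: MK_ok; [by [] | rewrite /=; lkall; reflexivity]);
   let Hx := fresh "Hx" in let Hf := fresh "Hf" in move=> ? [Hx Hf]).
apply: EXN_skip.
lkall.
reflexivity.
Qed.

Definition ED (A : stmt) := SEnv LI (LC A) [::].
Definition ndD := WNode 2 [:: (3, WNode 6 [::])].

Lemma nofield_A A : nofield (ED A) (WNode 6 [::]).
Proof. by split. Qed.

Lemma CALL_ok A fuel X w loc fs :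
  run_alg fuel A X = Some w -> lookup_loc loc 8 = Some X ->
  EXN (ED A) ndD [:: 0] fs loc (SAssign 9 (ECall 0 1 [:: v 8])) (fun l => l = (9, w) :: loc).
Proof.
move=> Hr H8.
have [l Hl] := @T_sim fuel A X w (ED A) 6 [:: 0; 0] fs (nofield_A A) erefl Hr.
case: fuel Hr Hl => [|n] Hr Hl; first by [].
exists n.+3, ((9, w) :: loc); split => //.
have -> : exec n.+3 (ED A) ndD [:: 0] loc fs (SAssign 9 (ECall 0 1 [:: v 8])) =
  rbind (eval n.+2 (ED A) ndD [:: 0] loc fs (ECall 0 1 [:: v 8]))
        (fun r => ROk (ONormal, (9, r.1) :: loc, r.2)) by [].
rewrite eval_call.
have -> : evargs n.+1 (ED A) ndD [:: 0] loc [:: v 8] fs = ROk ([:: X], fs).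
  by rewrite /= H8.
rewrite /call_cont; cbn -[exec].
have -> : exec n.+1 (ED A) (WNode 6 [::]) [:: 0; 0] [:: (0, X)] fs (T A) = ROk (OReturn w, l, fs).
  exact: (exec_mono (leqnn _) Hl).
by [].
Qed.

Lemma val_eqb_refl : forall w, val_eqb w w.
Proof.
apply: val_ind2 => //=.
by elim=> //= x l IH [-> /IH ->].
Qed.

Lemma val_eqb_sound : forall w w', val_eqb w w' -> w = w'.
Proof.
apply: val_ind2.
- by move=> n [] //= m /eqP ->.
- by move=> b [] //= b' /eqP ->.
- move=> l Hl [] // m /=.
  elim: l m Hl => [|x l IH] [|y m] //= [Hx Hl] /andP [/Hx -> /(IH m Hl) [->]] //.
Qed.

Fixpoint vsize (w : val) : nat :=
  match w with VArr l => (sumn (map vsize l)).+1 | _ => 1 end.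

Lemma dec_inv : forall n w t, vsize w <= n -> dec_wtree w = Some t -> w = enc_wtree t.
Proof.
elim=> [|n IH] w t; first by case: w.
case: w => // [[|[cn|b|l'] [|[n'|b'|ks] [|z r]]]] //=.
move=> Hs.
have Hks : forall ks0 : seq val, sumn (map vsize ks0) <= n ->
  forall r0, (fix go (ks : seq val) : option (seq (nat * wtree)) :=
        match ks with
        | [::] => Some [::]
        | VArr [:: VNat Ilab; w] :: ks' =>
            match dec_wtree w, go ks' with
            | Some t, Some r => Some ((Ilab, t) :: r)
            | _, _ => None
            end
        | _ => None
        end) ks0 = Some r0 ->
  ks0 = map (fun q => VArr [:: VNat q.1; enc_wtree q.2]) r0.
  elim=> [|x ks0 IHk] Hsz r0 /=; first by case=> <-.
  case: x Hsz => // [[|[I|?|?] [|w [|? ?]]]] //= Hsz.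
  case Ew: (dec_wtree w) => [tw|] //.
  case Eg: (_ ks0) => [rg|] // [<-] /=.
  rewrite (IH w tw) //; last by lia.
  by rewrite (IHk _ rg) //; lia.
case Eg: (_ ks) => [rg|] //= [<-] /=.
have Hsz2 : sumn (map vsize ks) <= n by move: Hs => /=; lia.
by rewrite (Hks ks Hsz2 rg Eg).
Qed.

Definition DIV E nd p fs loc s := forall n, exec n E nd p loc fs s = RFuel.

Lemma DIV_seq E nd p fs loc s1 s2 :
  EXN E nd p fs loc s1 (fun l => DIV E nd p fs l s2) -> DIV E nd p fs loc (SSeq s1 s2).
Proof.
case=> n1 [l1 [H1 HD]] [|n] //=.
case E1: (exec n E nd p loc fs s1) => [r| | |] //=.
all: have H := exec_det E1 H1 ltac:(by []) ltac:(by []).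
all: try discriminate.
by case: H => ->; apply: HD.
Qed.

Lemma DIV_if E nd p fs loc c s1 s2 :
  peval loc c = Some (VBool true) -> DIV E nd p fs loc s1 -> DIV E nd p fs loc (SIf c s1 s2).
Proof.
move=> Hc HD [|n] //=.
have [n1 H1] := peval_ok E nd p fs Hc.
case E1: (eval n E nd p loc fs c) => [r| | |] //=.
all: have H := eval_det E1 H1 ltac:(by []) ltac:(by []).
all: try discriminate.
by case: H => ->; apply: HD.
Qed.

Lemma D_upto A fs :
  EXN (ED A) ndD [:: 0] fs [::] (SAssign 1 (EConst (DATA A)))
    (fun l1 => EXN (ED A) ndD [:: 0] fs l1 PRE
       (fun l2 => lookup_loc l2 8 = Some (enc_instance (INST A)))).
Proof.
apply: EXN_assign => //; apply: PRE_ok.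
by rewrite lookup_cons.
Qed.

Lemma D_ret A fuel w fs :
  run_alg fuel A (enc_instance (INST A)) = Some w -> val_eqb w (enc_wtree tree1) = false ->
  EXN (ED A) ndD [:: 0] fs [::] (Dprog A) (fun _ => True).
Proof.
move=> Hr Hw; rewrite /Dprog /Rest.
apply: EXN_seq; apply: EXN_weak; first exact: D_upto.
move=> l1 H1; apply: EXN_seq; apply: EXN_weak; first exact: H1.
move=> l2 H8; rewrite /POST; apply: EXN_seq; apply: EXN_weak; first exact: (CALL_ok fs Hr H8).
move=> l3 ->; apply: (@EXN_if _ _ _ _ _ _ false); first by rewrite /= ?lookup_cons /= Hw.
exact: EXN_skip.
Qed.

Lemma D_div A fuel w fs :
  run_alg fuel A (enc_instance (INST A)) = Some w -> val_eqb w (enc_wtree tree1) = true ->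
  DIV (ED A) ndD [:: 0] fs [::] (Dprog A).
Proof.
move=> Hr Hw; rewrite /Dprog /Rest.
apply: DIV_seq; apply: EXN_weak; first exact: D_upto.
move=> l1 H1; apply: DIV_seq; apply: EXN_weak; first exact: H1.
move=> l2 H8; rewrite /POST; apply: DIV_seq; apply: EXN_weak; first exact: (CALL_ok fs Hr H8).
move=> l3 ->; apply: DIV_if; first by rewrite /= ?lookup_cons /= Hw.
move=> n; exact: Loop_div.
Qed.

Lemma tree1_out A : EXN (ED A) ndD [:: 0] [::] [::] (Dprog A) (fun _ => True) ->
  outputs LI (LC A) tree1 [::] 0.
Proof.
case=> n [l' [H _]]; exists n.+3.
rewrite /run_system; cbn -[exec]; rewrite (_ : find_main compC = Some (FunDef [::] mainC)) //=.
by rewrite H.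
Qed.

Lemma tree1_div A : DIV (ED A) ndD [:: 0] [::] [::] (Dprog A) ->
  ~ outputs LI (LC A) tree1 [::] 0.
Proof.
move=> HD [[|[|[|n]]]] //.
rewrite /run_system; cbn -[exec]; rewrite (_ : find_main compC = Some (FunDef [::] mainC)) //=.
by rewrite HD.
Qed.

Lemma tree2_out A : outputs LI (LC A) tree2 [::] 0.
Proof. by exists 10. Qed.

Lemma iface_ok I : I \in [:: 1; 2; 3; 4; 5] -> exists Ii, find_iface LI I = Some Ii.
Proof. by rewrite !inE => /orP [/eqP ->|/orP [/eqP ->|/orP [/eqP ->|/orP [/eqP ->|/eqP ->]]]]; eexists. Qed.

Lemma lib_ok_LC A : lib_ok LI (LC A).
Proof.
split; first by [].
split; first by [].
move=> C /=.
case=> [<-|[<-|[<-|[<-|[<-|[<-|[]]]]]]].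
all: split; [move=> I HI; apply: iface_ok; move: HI; apply/allP; by [] |].
all: move=> I Ii; rewrite /= !inE => /eqP -> [<-] pr /=; case=> // <-; by eexists.
Qed.

Lemma working_tree2 A : working REQ LI (LC A) tree2.
Proof.
move=> i o; rewrite inE => /eqP [-> ->]; exact: tree2_out.
Qed.

Ltac vt := repeat (simpl; match goal with
  | |- _ /\ _ => split
  | |- exists _, _ => eexists
  | |- find_comp _ _ = Some _ => reflexivity
  | |- True => exact I
  | |- _ => by []
end).

Lemma based_tree2 A : based_on (LC A) 1 tree2.
Proof. rewrite /based_on; vt. Qed.

Lemma based_tree1 A : based_on (LC A) 1 tree1.
Proof. rewrite /based_on; vt. Qed.

Lemma valid_INST A : valid_instance (INST A).
Proof.
split; first exact: lib_ok_LC.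
split; first by move=> i o; rewrite inE => /eqP [-> _].
split; first by eexists; split; first reflexivity; eexists.
split; first exact: based_tree2.
exact: working_tree2.
Qed.

Lemma fc_inv A n C : find_comp (LC A) n = Some C ->
  (n = 1 /\ C = compC) \/ (n = 2 /\ C = compD1 A) \/ (n = 3 /\ C = compD2) \/
      (n = 4 /\ C = compE) \/ (n = 5 /\ C = compF) \/ (n = 6 /\ C = compA A).
Proof.
do 7 (case: n => [|n]; first solve [by [] | move=> [<-]; repeat (solve [left; done] || right); done]).
by [].
Qed.

Lemma based_enum A S : based_on (LC A) 1 S -> S = tree1 \/ S = tree2.
Proof.
case: S => cn kids [/= ->] /= [_ [C [[<-] Hk]]].
case: kids Hk => [|[I t] [|[? ?] ?]] //= [-> [[C1 [HC1 HI1]] [Hv1 Hr1]]]; last by case: Hr1.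
case: t HC1 Hv1 => n1 k1 /= HC1 [_ [C1' [HC1' Hk1]]].
rewrite HC1 in HC1'; case: HC1' => ?; subst C1'.
case: (fc_inv HC1) => [[-> ->]|[[-> ->]|[[-> ->]|[[-> ->]|[[-> ->]|[-> ->]]]]]] //= in HI1 Hk1 *.
- case: k1 Hk1 => [|[I2 t2] [|[? ?] ?]] //= [-> [[C2 [HC2 HI2]] [Hv2 Hr2]]]; last by case: Hr2.
  case: t2 HC2 Hv2 => n2 k2 /= HC2 [_ [C2' [HC2' Hk2]]].
  rewrite HC2 in HC2'; case: HC2' => ?; subst C2'.
  case: (fc_inv HC2) => [[-> ->]|[[-> ->]|[[-> ->]|[[-> ->]|[[-> ->]|[-> ->]]]]]] //= in HI2 Hk2 *.
  by case: k2 Hk2 => [|[? ?] ?] //=; left.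
- case: k1 Hk1 => [|[I2 t2] [|[? ?] ?]] //= [-> [[C2 [HC2 HI2]] [Hv2 Hr2]]]; last by case: Hr2.
  case: t2 HC2 Hv2 => n2 k2 /= HC2 [_ [C2' [HC2' Hk2]]].
  rewrite HC2 in HC2'; case: HC2' => ?; subst C2'.
  case: (fc_inv HC2) => [[-> ->]|[[-> ->]|[[-> ->]|[[-> ->]|[[-> ->]|[-> ->]]]]]] //= in HI2 Hk2 *.
  case: k2 Hk2 => [|[I3 t3] [|[? ?] ?]] //= [-> [[C3 [HC3 HI3]] [Hv3 Hr3]]]; last by case: Hr3.
  case: t3 HC3 Hv3 => n3 k3 /= HC3 [_ [C3' [HC3' Hk3]]].
  rewrite HC3 in HC3'; case: HC3' => ?; subst C3'.
  case: (fc_inv HC3) => [[-> ->]|[[-> ->]|[[-> ->]|[[-> ->]|[[-> ->]|[-> ->]]]]]] //= in HI3 Hk3 *.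
  by case: k3 Hk3 => [|[? ?] ?] //=; right.
Qed.

Unset Implicit Arguments.

Theorem mainTheorem15 (EnvT : Type) (Env : wtree -> EnvT) :
  ~ (exists A : stmt, solves_ESAdapt Env A).
Proof.
case=> A HA.
have [fuel [w [S' [Hr [Hd [Hb [Hwk Hopt]]]]]]] := HA (INST A) (valid_INST A).
rewrite /= in Hb Hwk Hopt.
have Hin : (([::] : seq bool), 0) \in REQ by rewrite inE.
case Heq: (val_eqb w (enc_wtree tree1)).
- have HD := D_div [::] Hr Heq.
  have Ew := val_eqb_sound Heq; subst w.
  have : S' = tree1 by move: Hd => /= [<-].
  move=> ES; subst S'.
  exact: (tree1_div HD (Hwk _ _ Hin)).
- have Hw1 : working REQ LI (LC A) tree1.
    move=> i o; rewrite inE => /eqP [-> ->]; apply: tree1_out; exact: (D_ret [::] Hr Heq).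
  have Hle := Hopt tree1 (based_tree1 A) Hw1.
  case: (based_enum Hb) => ES; subst S'.
  + have := dec_inv (leqnn _) Hd => Ew; subst w.
    by rewrite val_eqb_refl in Heq.
  + by [].
Qed.
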